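(* Let $\mathbf A$ be a finite $\Pi$-structure, $\mathbf B$ a $\Sigma$-structure and $k\ge1$. For every $\Pi$-structure $\mathbf X$, if $\mathbf X\to\mathbf A$ then $\kappa_k^{\mathbf A,\mathbf B}(\mathbf X)\to\mathbf B$.
   Context: Structures. A (multisorted relational) signature consists of types and relation symbols, each symbol $R$ having an arity $\mathrm{ar}_R$, a tuple of types. A structure $\mathbf A$ consists of a set $A_t$ per type and relations $R^{\mathbf A}\subseteq A_{\mathrm{ar}_R(1)}\times\dots\times A_{\mathrm{ar}_R(k)}$. A homomorphism is a type-preserving family of maps preserving all relations; write $\mathbf A\to\mathbf B$. For a finite set $F$, $\mathbf B^F$ has domains $B_t^F$ and $(b_1,\dots,b_m)\in R^{\mathbf B^F}$ iff $(b_1(i),\dots,b_m(i))\in R^{\mathbf B}$ for all $i\in F$. $k$-consistency reduction. For a $\Pi$-structure $\mathbf X$ and a set $K$ of at most $k$ elements of $\mathbf X$, a partial homomorphism $K\to\mathbf A$ is a type-preserving $f\colon K\to A$ with $(f(v_1),\dots,f(v_m))\in R^{\mathbf A}$ for every $(v_1,\dots,v_m)\in R^{\mathbf X}$ with all $v_i\in K$. $\kappa_k^{\mathbf A,\mathbf B}(\mathbf X)$ is built as follows: (1) for each $K$ with $|K|\le k$ let $\mathcal F_K$ be the set of partial homomorphisms $K\to\mathbf A$; (2) for each $L\subset K$ remove from $\mathcal F_L$ every element that is not the restriction of some $g\in\mathcal F_K$, and remove from $\mathcal F_K$ every $g$ with $g|_L\notin\mathcal F_L$; (3) repeat (2) until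 nothing changes; (4) for each $K$ take a copy of $\mathbf B^{\mathcal F_K}$ with elements $(K;b)$, $b\colon\mathcal F_K\to B_t$; (5) for each $L\subseteq K$ and $b\colon\mathcal F_L\to B_t$ identify $(K;b\circ\rho_{K,L})$ with $(L;b)$, where $\rho_{K,L}(g)=g|_L$. The output is the quotient by the generated equivalence relation, with relations the images of those of the copies. *)

(* Defs.v *)
(* Multisorted relational structures encoded as a single
   carrier with a typing function (the disjoint union of the sorts). *)
From Stdlib Require Import List Relations.
Import ListNotations.

Record signature := {
  sty : Type;
  ssym : Type;
  sar : ssym -> list sty
}.

Record structure (S : signature) := {
  carrier :> Type;
  tp : carrier -> sty S;
  rel : ssym S -> list carrier -> Prop;
  rel_wt : forall R s, rel R s -> map tp s = sar S R
}.
Arguments tp {S s0} _.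
Arguments rel {S} s0 _ _.

Definition is_hom {S} (A B : structure S) (h : A -> B) : Prop :=
  (forall x, tp (h x) = tp x) /\
  (forall R s, rel A R s -> rel B R (map h s)).

Definition hom_exists {S} (A B : structure S) : Prop := exists h, is_hom A B h.

Definition finite_structure {S} (A : structure S) : Prop :=
  exists s : list A, forall a : A, In a s.

Section Kappa.
Variables (Pi Sigma : signature) (k : nat)
          (A : structure Pi) (B : structure Sigma) (X : structure Pi).

Definition small (K : X -> Prop) : Prop :=
  exists s : list X, length s <= k /\ forall x, K x <-> In x s.

(* partial maps K -> A are encoded as  X -> option A  with domain exactly K *)
Definition parthom (K : X -> Prop) (f : X -> option A) : Prop :=
  (forall x, K x <-> exists a, f x = Some a) /\
  (forall x a, f x = Some a -> tp a = tp x) /\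
  (forall R s, rel X R s -> (forall v, In v s -> K v) ->
     exists s', map f s = map Some s' /\ rel A R s').

Definition restricts (L : X -> Prop) (g f : X -> option A) : Prop :=
  forall x, (L x -> f x = g x) /\ (~ L x -> f x = None).

(* a family (F_K)_K that is stable under step (2) of the algorithm *)
Definition consistent (F : (X -> Prop) -> (X -> option A) -> Prop) : Prop :=
  (forall K f, F K f -> small K /\ parthom K f) /\
  (forall K L, small K -> (forall x, L x -> K x) ->
     (forall f, F L f -> exists g, F K g /\ restricts L g f) /\
     (forall g f, F K g -> restricts L g f -> F L f)).

(* the family F_K produced by steps (1)-(3): the greatest consistent
   subfamily of the partial homomorphisms *)
Definition kfam (K : X -> Prop) (f : X -> option A) : Prop :=
  exists F, consistent F /\ F K f.

(* pre-elements (K; b) of type t, with b : F_K -> B_t *)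
Record pre := { pK : X -> Prop; pt : sty Sigma; pb : (X -> option A) -> B }.

Definition valid (p : pre) : Prop :=
  small (pK p) /\ forall f, kfam (pK p) f -> tp (pb p f) = pt p.

(* generating identification: p = (K; b o rho_{K,L}), q = (L; b), L ⊆ K *)
Definition gen (p q : pre) : Prop :=
  valid p /\ valid q /\ pt p = pt q /\ (forall x, pK q x -> pK p x) /\
  (forall g f, kfam (pK p) g -> restricts (pK q) g f -> pb p g = pb q f).

Definition kequiv : pre -> pre -> Prop := clos_refl_sym_trans pre gen.

(* elements of the quotient: equivalence classes (tagged with their type) *)
Definition kcarrier : Type :=
  { c : sty Sigma * (pre -> Prop) |
    exists p, valid p /\ pt p = fst c /\ snd c = kequiv p }.

Definition ktp (c : kcarrier) : sty Sigma := fst (proj1_sig c).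

(* relations: images of the relations of the copies B^{F_K} *)
Definition krel (R : ssym Sigma) (cs : list kcarrier) : Prop :=
  map ktp cs = sar Sigma R /\
  exists (K : X -> Prop) (qs : list (pre * kcarrier)),
    small K /\ map snd qs = cs /\ map (fun q => pt (fst q)) qs = sar Sigma R /\
    (forall q, In q qs ->
       valid (fst q) /\ pK (fst q) = K /\ snd (proj1_sig (snd q)) = kequiv (fst q)) /\
    (forall f, kfam K f -> rel B R (map (fun q => pb (fst q) f) qs)).

Lemma krel_wt R s : krel R s -> map ktp s = sar Sigma R.
Proof. intros H; exact (proj1 H). Qed.

Definition kappa : structure Sigma :=
  {| carrier := kcarrier; tp := ktp; rel := krel; rel_wt := krel_wt |}.

End Kappa.

(* Main.v *)
Require Import Defs.
From Stdlib Require Import Arith List Relations Classical ClassicalEpsilon ClassicalDescription.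
Import ListNotations.

Section Proof.
Variables (Pi Sigma : signature) (A : structure Pi) (B : structure Sigma) (k : nat)
  (X : structure Pi) (h : X -> A) (Hh : is_hom X A h).

Definition hK (K : X -> Prop) (x : X) : option A :=
  if excluded_middle_informative (K x) then Some (h x) else None.

Lemma hK_in K x : K x -> hK K x = Some (h x).
Proof. unfold hK; destruct (excluded_middle_informative (K x)); tauto. Qed.
Lemma hK_out K x : ~ K x -> hK K x = None.
Proof. unfold hK; destruct (excluded_middle_informative (K x)); tauto. Qed.

Definition Fh (K : X -> Prop) (f : X -> option A) : Prop :=
  small Pi k X K /\ (forall x, K x -> f x = Some (h x)) /\ (forall x, ~ K x -> f x = None).

Lemma small_sub K L : small Pi k X K -> (forall x, L x -> K x) -> small Pi k X L.
Proof.
  intros [s [Hl Hs]] HLK.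
  exists (filter (fun x => if excluded_middle_informative (L x) then true else false) s).
  split.
  - eapply Nat.le_trans; [apply filter_length_le|exact Hl].
  - intros x; rewrite filter_In.
    destruct (excluded_middle_informative (L x)); split; intros H.
    + split; [apply Hs, HLK, l|reflexivity].
    + exact l.
    + contradiction.
    + destruct H; discriminate.
Qed.

Lemma Fh_consistent : consistent Pi k A X Fh.
Proof.
  destruct Hh as [Htp Hrel].
  split.
  - intros K f [Hs [Hin Hout]]. split; [exact Hs|].
    split; [|split].
    + intros x; split.
      * intros Kx; eauto.
      * intros [a Ha]; destruct (classic (K x)) as [Kx|nKx]; [exact Kx|].
        rewrite Hout in Ha by exact nKx; discriminate.
    + intros x a Ha. destruct (classic (K x)) as [Kx|nKx].
      * rewrite Hin in Ha by exact Kx; injection Ha as <-; apply Htp.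
      * rewrite Hout in Ha by exact nKx; discriminate.
    + intros R s Hr Hall. exists (map h s). split.
      * rewrite map_map. apply map_ext_in. intros v Hv. apply Hin, Hall, Hv.
      * apply Hrel, Hr.
  - intros K L HK HLK. split.
    + intros f [HL [Hin Hout]]. exists (hK K). split.
      * split; [exact HK|split]; [apply hK_in|apply hK_out].
      * intros x; split; intros Hx.
        -- rewrite Hin by exact Hx. rewrite hK_in by (apply HLK, Hx). reflexivity.
        -- apply Hout, Hx.
    + intros g f [_ [Gin _]] Hres. split; [eapply small_sub; eauto|split].
      * intros x Lx. destruct (Hres x) as [H1 _]. rewrite H1 by exact Lx. apply Gin, HLK, Lx.
      * intros x nLx. apply (Hres x), nLx.
Qed.

Lemma hK_kfam K : small Pi k X K -> kfam Pi k A X K (hK K).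
Proof.
  intros HK. exists Fh. split; [apply Fh_consistent|].
  split; [exact HK|split]; [apply hK_in|apply hK_out].
Qed.

Definition val (p : pre Pi Sigma A B X) : B := pb _ _ _ _ _ p (hK (pK _ _ _ _ _ p)).

Lemma val_equiv p q : kequiv Pi Sigma k A B X p q -> val p = val q.
Proof.
  induction 1 as [p q Hg| p | p q _ IH | p q r _ IH1 _ IH2]; try congruence.
  destruct Hg as [[HKp _] [_ [_ [Hsub Hb]]]].
  unfold val. apply Hb.
  - apply hK_kfam, HKp.
  - intros x; split; intros Hx.
    + rewrite !hK_in; auto.
    + apply hK_out, Hx.
Qed.

Definition phi (c : kcarrier Pi Sigma k A B X) : B :=
  val (proj1_sig (constructive_indefinite_description _ (proj2_sig c))).

Lemma phi_spec c p : snd (proj1_sig c) = kequiv Pi Sigma k A B X p -> phi c = val p.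
Proof.
  intros Hc. unfold phi.
  destruct (constructive_indefinite_description _ (proj2_sig c)) as [p' Hp''].
  simpl. destruct Hp'' as [_ [_ Hp']]. symmetry. apply val_equiv.
  assert (E : kequiv Pi Sigma k A B X p = kequiv Pi Sigma k A B X p') by congruence.
  rewrite E. apply rst_refl.
Qed.

Lemma phi_hom : is_hom (kappa Pi Sigma k A B X) B phi.
Proof.
  split.
  - intros c. simpl. unfold phi, ktp.
    destruct (constructive_indefinite_description _ (proj2_sig c)) as [p Hp].
    simpl. destruct Hp as [[HK Hv] [Ht _]]. unfold val. rewrite Hv; [exact Ht|]. apply hK_kfam, HK.
  - intros R cs [_ [K [qs [HK [Hcs [_ [Hq Hrel]]]]]]]. simpl.
    specialize (Hrel (hK K) (hK_kfam K HK)).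
    replace (map phi cs) with (map (fun q => pb _ _ _ _ _ (fst q) (hK K)) qs); [exact Hrel|].
    subst cs. rewrite map_map. apply map_ext_in. intros q Hin.
    destruct (Hq q Hin) as [_ [HpK Heq]].
    rewrite (phi_spec _ _ Heq). unfold val. rewrite HpK. reflexivity.
Qed.
End Proof.

Theorem mainTheorem18 (Pi Sigma : signature) (A : structure Pi)
  (B : structure Sigma) (k : nat) :
  finite_structure A -> 1 <= k ->
  forall X : structure Pi,
    hom_exists X A -> hom_exists (kappa Pi Sigma k A B X) B.
Proof.
  intros _ _ X [h Hh]. exists (phi Pi Sigma A B k X h). apply phi_hom, Hh.
Qed.
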